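(* There exists $C=C(\dim G)$ such that the following holds. Let $\eta>0$, let $B\subseteq B_1^U$ be a ball of Lebesgue measure at least $\eta$, let $\rho>0$, $t\in\mathbb R$ and $v\in Ge_1$. Then $$\bigl|\{\mathbf s\in B:\|a_tu_{\mathbf s}v\|\le e^t\eta^2\rho^2\|v\|\}\bigr|\le C\rho\,|B|.$$
   Context: Fix $n\ge3$. $G=\mathrm{SO}^\circ(n,1)$ (identity component of determinant-one matrices preserving $Q_0(x)=2x_1x_{n+1}-\sum_{k=2}^nx_k^2$) acting linearly on $\mathbb R^{n+1}$ with Euclidean norm; $e_1$ is the first standard basis vector. $a_t=\mathrm{diag}(e^t,1,\dots,1,e^{-t})$; $u_{\mathbf s}=n(\mathbf s,0)$ with $n(\mathbf s,r)=\begin{pmatrix}1&(\mathbf s,r)&\frac12\|(\mathbf s,r)\|^2\\0&I_{n-1}&(\mathbf s,r)^T\\0&0&1\end{pmatrix}$. $B_1^U=\{\mathbf s\in\mathbb R^{n-2}:\|\mathbf s\|\le1\}$ with Lebesgue measure $|\cdot|$ normalized so $|B_1^U|=1$. *)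

(* Defs.v *)
From HB Require Import structures.
From mathcomp Require Import all_boot all_order all_algebra.
From mathcomp Require Import all_classical all_reals all_analysis.
Unset Printing Implicit Defensive.
Import Order.TTheory GRing.Theory Num.Theory.
Import numFieldNormedType.Exports.
Local Open Scope classical_set_scope.
Local Open Scope ring_scope.

Section Defs.
Variable R : realType.

Definition eucl_norm (m : nat) (x : 'cV[R]_m) : R := Num.sqrt (\sum_(i < m) x i 0 ^+ 2).
Definition eucl_normr k (s : 'rV[R]_k) : R := Num.sqrt (\sum_(i < k) s 0 i ^+ 2).

(* Coordinates are indexed 0..n (paper's x_1 .. x_{n+1}). *)
Definition Q0 n (x : 'cV[R]_n.+1) : R :=
  2 * x ord0 0 * x ord_max 0 - \sum_(i < n.+1 | (0 < i < n)%N) x i 0 ^+ 2.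

Definition SOQ0 n : set 'M[R]_n.+1 :=
  [set g | \det g = 1 /\ forall x : 'cV[R]_n.+1, Q0 _ (g *m x) = Q0 _ x].

Definition Gn n : set 'M[R]_n.+1 := connected_component (SOQ0 n) (1%:M : 'M[R]_n.+1).

Definition e1 n : 'cV[R]_n.+1 := \col_i (i == ord0)%:R.

Definition orbit_e1 n : set 'cV[R]_n.+1 := [set g *m e1 n | g in Gn n].

Definition a_t n (t : R) : 'M[R]_n.+1 :=
  \matrix_(i, j) (if i == j then
                    (if i == ord0 then expR t
                     else if i == ord_max then expR (- t) else 1)
                  else 0).

(* m-th coordinate (0-based) of the vector (s,0) in R^{k+1}; zero beyond k *)
Definition padc k (s : 'rV[R]_k) (m : nat) : R :=
  if insub m is Some i then s 0 i else 0.

(* u_s = n((s,0)) for s in R^{n-2}, written with 0-based indices: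
   row 0 = (1, w, |w|^2/2), rows 1..n-1 = (0, I, w^T), row n = (0,..,0,1),
   where w = (s,0) in R^{n-1}, w_{m} = padc s m (0-based). *)
Definition u_s (n : nat) (s : 'rV[R]_(n - 2)) : 'M[R]_n.+1 :=
  \matrix_(i, j)
    (if i == j then 1
     else if (val i == 0%N) && (0 < val j < n)%N then padc _ s (val j).-1
     else if (val i == 0%N) && (val j == n) then (eucl_normr _ s ^+ 2) / 2
     else if (0 < val i < n)%N && (val j == n) then padc _ s (val i).-1
     else 0).

(* Lebesgue outer measure on R^k: infimum of total volume of countable
   covers by closed boxes [a_1,b_1] x ... x [a_k,b_k]. *)
Definition box k (ab : 'rV[R]_k * 'rV[R]_k) : set 'rV[R]_k :=
  [set s | forall i, ab.1 0 i <= s 0 i <= ab.2 0 i].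
Definition box_vol k (ab : 'rV[R]_k * 'rV[R]_k) : R :=
  \prod_(i < k) Num.max (ab.2 0 i - ab.1 0 i) 0.
Definition leb_outer k (A : set 'rV[R]_k) : \bar R :=
  ereal_inf [set (\sum_(j <oo) (box_vol k (F j))%:E)%E
            | F in [set F : nat -> 'rV[R]_k * 'rV[R]_k
                    | A `<=` \bigcup_j box k (F j)]].

Definition cball k (c : 'rV[R]_k) (r : R) : set 'rV[R]_k :=
  [set s | eucl_normr k (s - c) <= r].

Definition B1U k : set 'rV[R]_k := cball k 0 1.

(* Lebesgue measure normalized so that |B_1^U| = 1 *)
Definition nmeas k (A : set 'rV[R]_k) : \bar R :=
  (leb_outer k A * ((fine (leb_outer k (B1U k)))^-1)%:E)%E.

End Defs.

Arguments eucl_norm {R m}.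
Arguments eucl_normr {R k}.
Arguments Q0 {R n}.
Arguments SOQ0 {R}.
Arguments Gn {R}.
Arguments e1 {R}.
Arguments orbit_e1 {R}.
Arguments a_t {R}.
Arguments padc {R k}.
Arguments u_s {R} n.
Arguments box {R k}.
Arguments box_vol {R k}.
Arguments leb_outer {R k}.
Arguments cball {R k}.
Arguments B1U {R}.
Arguments nmeas {R k}.

(* Main.v *)
Require Import Defs.
From HB Require Import structures.
From mathcomp Require Import all_boot all_order all_algebra.
From mathcomp Require Import all_classical all_reals all_analysis.
From mathcomp Require Import ring lra zify.
Import Order.TTheory GRing.Theory Num.Theory.
Import numFieldNormedType.Exports.
Local Open Scope classical_set_scope.
Local Open Scope ring_scope.

Section Aux.
Variable R : realType.
Lemma leb_mono k (A B : set 'rV[R]_k) : A `<=` B -> (leb_outer A <= leb_outer B)%E.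
Proof.
move=> AB; apply: ereal_inf_le_tmp => _ [F HF <-]; exists F => //.
exact: subset_trans HF.
Qed.

Lemma box_vol_ge0 k (ab : 'rV[R]_k * 'rV[R]_k) : 0 <= box_vol ab.
Proof. by apply: prodr_ge0 => i _; rewrite le_max lexx orbT. Qed.

Lemma leb_ge0 k (A : set 'rV[R]_k) : (0 <= leb_outer A)%E.
Proof.
apply: le_ereal_inf_tmp => _ [F _ <-]; apply: nneseries_ge0 => i _ _.
by rewrite lee_fin box_vol_ge0.
Qed.

Lemma eucl_normr_ge0 k (s : 'rV[R]_k) : 0 <= eucl_normr s.
Proof. exact: sqrtr_ge0. Qed.

Lemma eucl_normrZ k (a : R) (s : 'rV[R]_k) : eucl_normr (a *: s) = `|a| * eucl_normr s.
Proof.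
rewrite /eucl_normr -sqrtr_sqr -sqrtrM ?sqr_ge0 // mulr_sumr; congr Num.sqrt.
by apply: eq_bigr => i _; rewrite mxE exprMn.
Qed.

Lemma leb_ball k (c : 'rV[R]_k) (r : R) : 0 < r ->
  (leb_outer (cball c r) <= (r ^+ k)%:E * leb_outer (B1U k))%E.
Proof.
move=> r0.
have rk0 : 0 < r ^+ k by rewrite exprn_gt0.
rewrite -lee_pdivrMl //.
apply: le_ereal_inf_tmp => _ [F HF <-].
rewrite lee_pdivrMl // -nneseriesZl; last by move=> i _; rewrite lee_fin box_vol_ge0.
apply: ereal_inf_lbound.
exists (fun j => (c + r *: (F j).1, c + r *: (F j).2)).
  move=> s hs.
  have : B1U k (r^-1 *: (s - c)).
    rewrite /B1U /cball /= subr0 eucl_normrZ ger0_norm; last by rewrite invr_ge0 ltW.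
    by rewrite ler_pdivrMl // mulr1.
  move/HF => [j _ hj]; exists j => // i.
  have := hj i; rewrite !mxE /= => /andP [h1 h2].
  have e : s 0 i = c 0 i + r * (r^-1 * (s 0 i - c 0 i)).
    by rewrite mulrA divff ?gt_eqF // mul1r addrC subrK.
  rewrite e lerD2l ler_pM2l // lerD2l ler_pM2l //.
  by rewrite h1.
apply: congr_lim; apply/funext => N; apply: eq_bigr => j _.
congr (_%:E); have -> : r ^+ k = \prod_(i < k) r by rewrite prodr_const card_ord.
rewrite /box_vol -big_split /=.
apply: eq_bigr => i _; rewrite !mxE maxr_pMr ?ltW // mulr0.
by congr (Num.max _ _); ring.
Qed.
Definition vf k (v : 'cV[R]_k) m := padc (v^T) m.
Arguments vf {k}.

Lemma padcE k (s:'rV[R]_k) (i:'I_k) : padc s i = s 0 i.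
Proof. by rewrite /padc valK. Qed.

Lemma padc_out k (s : 'rV[R]_k) m : (k <= m)%N -> padc s m = 0.
Proof. by move=> h; rewrite /padc insubF // ltnNge h. Qed.

Lemma vfE k (v : 'cV[R]_k) (i:'I_k) : vf v i = v i 0.
Proof. by rewrite /vf padcE mxE. Qed.

Lemma sum3 k (G : nat -> R) :
  \sum_(i < k.+3) G i = G 0%N + \sum_(i < k) G i.+1 + G k.+1 + G k.+2.
Proof.
rewrite -(big_mkord xpredT G) -(big_mkord xpredT (fun i => G i.+1)).
rewrite big_nat_recl // big_nat_recr //= big_nat_recr //=.
by rewrite !addrA.
Qed.

Lemma sum3' n (G : nat -> R) : (2 <= n)%N ->
  \sum_(i < n.+1) G i = G 0%N + \sum_(i < n - 2) G i.+1 + G n.-1 + G n.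
Proof.
case: n => [|[|k]] // _.
have := sum3 k G; rewrite !subSS subn0 => ->; done.
Qed.

Lemma norm2 n (v : 'cV[R]_n.+1) : (2 <= n)%N -> eucl_norm v ^+ 2 =
  vf v 0%N ^+ 2 + \sum_(i < n - 2) vf v i.+1 ^+ 2 + vf v n.-1 ^+ 2 + vf v n ^+ 2.
Proof.
move=> hn.
rewrite /eucl_norm sqr_sqrtr; last by apply: sumr_ge0 => i _; exact: sqr_ge0.
rewrite (eq_bigr (fun i : 'I_n.+1 => vf v i ^+ 2)); last by move=> i _; rewrite vfE.
exact: (sum3' _ (fun i => vf v i ^+ 2)).
Qed.

Lemma Q0E n (v : 'cV[R]_n.+1) : (2 <= n)%N -> Q0 v =
  2 * vf v 0%N * vf v n - (\sum_(i < n - 2) vf v i.+1 ^+ 2 + vf v n.-1 ^+ 2).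
Proof.
move=> hn.
rewrite /Q0 big_mkcond.
rewrite (eq_bigr (fun i : 'I_n.+1 => if (0 < i < n)%N then vf v i ^+ 2 else 0)); last first.
  by move=> i _; rewrite vfE.
rewrite (sum3' _ (fun m => if (0 < m < n)%N then vf v m ^+ 2 else 0)) // /= ltnn andbF add0r addr0.
have -> : (0 < n.-1 < n)%N by lia.
rewrite (_ : v ord0 0 = vf v 0%N); last by rewrite (vfE _ v ord0).
rewrite (_ : v ord_max 0 = vf v n); last by rewrite (vfE _ v ord_max).
congr (_ - (_ + _)); apply: eq_bigr => i _.
have hi := ltn_ord i.
by rewrite ifT //; lia.
Qed.

Lemma firstE n (s : 'rV[R]_(n - 2)) (v : 'cV[R]_n.+1) : (2 <= n)%N ->
  (u_s n s *m v) ord0 0 =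
  vf v 0%N + \sum_(i < n - 2) s 0 i * vf v i.+1 + eucl_normr s ^+ 2 / 2 * vf v n.
Proof.
move=> hn.
rewrite mxE.
rewrite (eq_bigr (fun j : 'I_n.+1 => let m := val j in
   (if m == 0%N then 1 else if (0 < m < n)%N then padc s m.-1
    else if m == n then eucl_normr s ^+ 2 / 2 else 0) * vf v m)); last first.
  move=> j _ /=; rewrite vfE !mxE /=.
  have -> : (ord0 == j) = (val j == 0%N) by rewrite eq_sym -val_eqE.
  done.
rewrite (sum3' _ (fun m => (if m == 0%N then 1 else if (0 < m < n)%N then padc s m.-1
    else if m == n then eucl_normr s ^+ 2 / 2 else 0) * vf v m)) // /=.
rewrite ltnn andbF eqxx mul1r.
have -> : (n.-1 == 0%N) = false by lia.
have -> : (0 < n.-1 < n)%N by lia.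
rewrite padc_out ?mul0r ?addr0; last by case: n s v hn => [|[|k]] //= *; rewrite !subSS subn0.
have -> : (n == 0%N) = false by lia.
congr (_ + _ + _); apply: eq_bigr => i _.
have hi := ltn_ord i.
rewrite ifT; last by lia.
by rewrite padcE.
Qed.

Lemma atE n t (w : 'cV[R]_n.+1) : (a_t n t *m w) ord0 0 = expR t * w ord0 0.
Proof.
rewrite mxE big_ord_recl big1 ?addr0; first by rewrite !mxE eqxx.
by move=> i _; rewrite !mxE (negbTE (neq_lift _ _)) mul0r.
Qed.


Lemma norm_ge n (w : 'cV[R]_n.+1) : `|w ord0 0| <= eucl_norm w.
Proof.
rewrite /eucl_norm -sqrtr_sqr; apply: ler_wsqrtr.
rewrite big_ord_recl lerDl; apply: sumr_ge0 => i _; exact: sqr_ge0.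
Qed.

Lemma pure (x b c d Ss Ssa Sa W2 N p : R) :
 W2 = b^+2*Ss + 2*b*Ssa + Sa -> Sa <= 2*W2 + 2*b^+2*Ss -> 2*x*b = Sa + c^+2 ->
 N^+2 = x^+2+Sa+c^+2+b^+2 -> 0 <= N ->
 p = x + Ssa + Ss/2*b -> `|p| <= d*N -> 0<=Ss -> Ss<=1 -> 0<=d -> d <= 1/8 -> 0 <= W2 -> 0 <= Sa ->
 W2 <= 7*d*b^+2.
Proof.
move=> h1 h2 h3 h4 N0 hp hpN s0 s1 d0 d1 W0 Sa0.
pose Y := W2 + c^+2; have eY : Y = W2 + c^+2 by []; clearbody Y.
have hY : 2*b* p = Y by rewrite eY hp; lra.
have Y0 : 0 <= Y by rewrite eY; nra.
have p2 : p^+2 <= d^+2 * N^+2.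
  rewrite -(ger0_norm (sqr_ge0 p)) normrX -exprMn.
  apply: lerXn2r => //; rewrite ?nnegrE //; nra.
have hZ : Sa + c^+2 <= 2*Y + 2*b^+2 by rewrite eY; nra.
have hY2 : Y^+2 <= (d*(2*Y + 4*b^+2))^+2.
  have e1 : Y^+2 = 4*b^+2* p^+2 by rewrite -hY; ring.
  have e2 : 4*b^+2*N^+2 = (Sa+c^+2 + 2*b^+2)^+2.
    rewrite h4.
    have -> : x^+2+Sa+c^+2+b^+2 = x^+2 + (Sa+c^+2) + b^+2 by ring.
    rewrite -h3; ring.
  have : 4*b^+2* p^+2 <= d^+2 * (Sa+c^+2 + 2*b^+2)^+2 by rewrite -e2; nra.
  have : (Sa+c^+2 + 2*b^+2)^+2 <= (2*Y + 4*b^+2)^+2.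
    apply: lerXn2r => //; rewrite ?nnegrE; nra.
  nra.
have : Y <= d*(2*Y + 4*b^+2).
  by rewrite -ler_sqr // ?nnegrE; nra.
rewrite eY; nra.
Qed.

Definition s0 n (v : 'cV[R]_n.+1) : 'rV[R]_(n - 2) :=
  (- (vf v n)^-1) *: \row_(i < n - 2) vf v i.+1.
Arguments s0 {n}.

Lemma normv0 m (v : 'cV[R]_m) : eucl_norm v = 0 -> v = 0.
Proof.
move=> h; have : \sum_(i < m) v i 0 ^+ 2 = 0.
  have h0 : 0 <= \sum_(i < m) v i 0 ^+ 2 by apply: sumr_ge0 => i _; exact: sqr_ge0.
  by rewrite -(sqr_sqrtr h0); move: h; rewrite /eucl_norm => ->; rewrite expr0n.
move/psumr_eq0P => H; apply/matrixP => i j; rewrite ord1 mxE.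
by apply/eqP; rewrite -sqrf_eq0; apply/eqP; apply: H => // k _; exact: sqr_ge0.
Qed.

Lemma core n (v : 'cV[R]_n.+1) (s : 'rV[R]_(n - 2)) t d :
 (2 <= n)%N -> Q0 v = 0 -> v != 0 -> 0 <= d -> d <= 1/8 -> eucl_normr s <= 1 ->
 eucl_norm (a_t n t *m u_s n s *m v) <= expR t * d * eucl_norm v ->
 eucl_normr (s - s0 v) ^+ 2 <= 7 * d.
Proof.
move=> hn hQ hv d0 d1 hs hS.
have hp : `|(u_s n s *m v) ord0 0| <= d * eucl_norm v.
  move: hS; rewrite -mulmxA => /(le_trans (norm_ge _ _)).
  by rewrite atE normrM gtr0_norm ?expR_gt0 // -mulrA ler_pM2l ?expR_gt0.
rewrite firstE // in hp.
have hQ' := Q0E _ v hn; rewrite hQ in hQ'.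
have hN := norm2 _ v hn.
have hSs : eucl_normr s ^+ 2 = \sum_(i < n - 2) s 0 i ^+ 2.
  by rewrite sqr_sqrtr //; apply: sumr_ge0 => i _; exact: sqr_ge0.
rewrite hSs in hp.
have Ss0 : 0 <= \sum_(i < n - 2) s 0 i ^+ 2 by apply: sumr_ge0 => i _; exact: sqr_ge0.
have Ss1 : \sum_(i < n - 2) s 0 i ^+ 2 <= 1.
  rewrite -hSs; have := eucl_normr_ge0 _ s; nra.
have Sa0 : 0 <= \sum_(i < n - 2) vf v i.+1 ^+ 2 by apply: sumr_ge0 => i _; exact: sqr_ge0.
move: hp hQ' hN Ss0 Ss1 Sa0.
set x := vf v 0%N; set b := vf v n; set c := vf v n.-1.
set Sa := \sum_(i < n - 2) vf v i.+1 ^+ 2.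
set Ss := \sum_(i < n - 2) s 0 i ^+ 2.
set Ssa := \sum_(i < n - 2) s 0 i * vf v i.+1.
set N := eucl_norm v.
move=> hp hQ' hN Ss0 Ss1 Sa0.
pose W2 := \sum_(i < n - 2) (b * s 0 i + vf v i.+1) ^+ 2.
have W0 : 0 <= W2 by apply: sumr_ge0 => i _; exact: sqr_ge0.
have h1 : W2 = b^+2 * Ss + 2 * b * Ssa + Sa.
  rewrite /W2 (eq_bigr (fun i : 'I_(n - 2) => b^+2 * s 0 i ^+ 2 + 2 * b * (s 0 i * vf v i.+1)
     + vf v i.+1 ^+ 2)); last by move=> i _; ring.
  by rewrite !big_split /= -!mulr_sumr.
have h2 : Sa <= 2 * W2 + 2 * b^+2 * Ss.
  have : 0 <= \sum_(i < n - 2) (2 * b * s 0 i + vf v i.+1) ^+ 2.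
    by apply: sumr_ge0 => i _; exact: sqr_ge0.
  rewrite (eq_bigr (fun i : 'I_(n - 2) => 4 * b^+2 * s 0 i ^+ 2 + 4 * b * (s 0 i * vf v i.+1)
     + vf v i.+1 ^+ 2)); last by move=> i _; ring.
  rewrite !big_split /= -!mulr_sumr -/Ss -/Ssa -/Sa h1 => H.
  lra.
have N0 : 0 <= N by exact: sqrtr_ge0.
have hb : b != 0.
  apply/negP => /eqP hb0.
  have hSa : Sa = 0 by move: hQ'; rewrite hb0; nra.
  have hc : c = 0 by move: hQ'; rewrite hb0; nra.
  have ha : forall i : 'I_(n - 2), vf v i.+1 = 0.
    move=> i; apply/eqP; rewrite -sqrf_eq0; apply/eqP.
    by move/psumr_eq0P: hSa; apply => // j _; exact: sqr_ge0.
  have hSsa : Ssa = 0 by rewrite /Ssa big1 // => i _; rewrite ha mulr0.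
  move: hp hN; rewrite hSsa hSa hc hb0 => hp hN.
  have hx2 : `|x| ^+ 2 = x ^+ 2 by rewrite -normrX ger0_norm ?sqr_ge0.
  have hx0 : 0 <= `|x| by [].
  have : N = 0.
    have e : `|x| = N.
      apply/eqP; rewrite -(eqrXn2 (isT : (0 < 2)%N)) //; apply/eqP; rewrite hx2 hN; ring.
    move: hp; rewrite addr0 mulr0 addr0 e; nra.
  by move/normv0 => h0; move: hv; rewrite h0 eqxx.
have hW : W2 <= 7 * d * b ^+ 2.
  apply: (@pure x b c d Ss Ssa Sa W2 N (x + Ssa + Ss / 2 * b)); rewrite ?hN //; lra.
have eS : eucl_normr (s - s0 v) ^+ 2 = \sum_(i < n - 2) (s 0 i + b^-1 * vf v i.+1) ^+ 2.
  rewrite sqr_sqrtr; last by apply: sumr_ge0 => i _; exact: sqr_ge0.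
  by apply: eq_bigr => i _; rewrite !mxE -/b; congr (_ ^+ 2); ring.
have eW : b ^+ 2 * \sum_(i < n - 2) (s 0 i + b^-1 * vf v i.+1) ^+ 2 = W2.
  rewrite mulr_sumr; apply: eq_bigr => i _; field; exact: hb.
have b2 : 0 < b ^+ 2 by rewrite exprn_even_gt0 //.
rewrite eS -(ler_pM2l b2) eW; nra.
Qed.


Lemma expr_le_self (x : R) k : (0 < k)%N -> 0 <= x -> x <= 1 -> x ^+ k <= x.
Proof.
case: k => // k _ x0 x1; rewrite exprS; apply: ler_piMr => //; exact: exprn_ile1.
Qed.

Lemma e1_facts n (v : 'cV[R]_n.+1) : (0 < n)%N -> orbit_e1 n v -> Q0 v = 0 /\ v != 0.
Proof.
move=> hn [g hg <-].
have [hdet hQ] := connected_component_sub hg.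
split.
  rewrite hQ /Q0 !mxE eqxx.
  have -> : (ord_max == ord0 :> 'I_n.+1) = false by rewrite -val_eqE /=; lia.
  rewrite mulr0 big1 ?subr0 // => i /andP [hi _].
  rewrite mxE; have -> : (i == ord0) = false by rewrite -val_eqE /=; lia.
  by rewrite expr0n.
apply/negP => /eqP h.
have : invmx g *m (g *m e1 n) = e1 n.
  by rewrite mulmxA mulVmx ?mul1mx // unitmxE hdet unitr1.
rewrite h mulmx0 => /matrixP /(_ ord0 0); rewrite !mxE eqxx /= => /eqP.
by rewrite eq_sym oner_eq0.
Qed.

End Aux.
Arguments s0 {R n}.
Arguments vf {R k}.

Theorem lemma5p1 (R : realType) (n : nat) (hn : (3 <= n)%N) :
  exists C : R, 0 < C /\
  forall (eta : R), 0 < eta ->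
  forall (c : 'rV[R]_(n - 2)) (r : R),
    cball c r `<=` B1U (n - 2) ->
    (eta%:E <= nmeas (cball c r))%E ->
  forall (rho t : R), 0 < rho ->
  forall v : 'cV[R]_n.+1, orbit_e1 n v ->
    (nmeas [set s | cball c r s /\
              (eucl_norm (a_t n t *m u_s n s *m v)
                <= expR t * eta ^+ 2 * rho ^+ 2 * eucl_norm v)%R]
     <= (C * rho)%:E * nmeas (cball c r))%E.
Proof.
exists 3; split => //.
move=> eta eta0 c r hB hBeta rho t rho0 v hv.
have hn2 : (2 <= n)%N by lia.
have [hQv hv0] := @e1_facts R n v (ltnW (ltnW hn)) hv.
set S := [set s | _ /\ _].
pose L : R := fine (@leb_outer R _ (B1U (n - 2))).
have nmE (X : set 'rV[R]_(n - 2)) : nmeas X = (leb_outer X * (L^-1)%:E)%E by [].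
have hL0 : L != 0.
  apply/negP => /eqP hL0; move: hBeta; rewrite nmE hL0 invr0 mule0 lee_fin; lra.
have hL : @leb_outer R _ (B1U (n - 2)) = L%:E.
  move: hL0; rewrite /L; case: (leb_outer _) => //= ; by rewrite eqxx.
have Lpos : 0 < L.
  have := @leb_ge0 R _ (B1U (n - 2)); rewrite hL lee_fin => h.
  by rewrite lt_neqAle eq_sym hL0 h.
have iL0 : (0 <= (L^-1)%:E)%E by rewrite lee_fin invr_ge0 ltW.
have mono (A B : set 'rV[R]_(n - 2)) : A `<=` B -> (nmeas A <= nmeas B)%E.
  by move=> AB; rewrite !nmE; apply: lee_wpmul2r => //; exact: (@leb_mono R).
have nB1 : @nmeas R _ (B1U (n - 2)) = 1%E.
  by rewrite nmE hL -EFinM divff // gt_eqF.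
have eta1 : eta <= 1.
  have := le_trans hBeta (mono _ _ hB); rewrite nB1 lee_fin; done.
have nB0 : (0 <= nmeas (cball c r))%E.
  by rewrite nmE; apply: mule_ge0 => //; exact: (@leb_ge0 R).
have SB : S `<=` cball c r by move=> s [].
case: (lerP (1/3) (eta * rho)) => her.
  apply: le_trans (mono _ _ SB) _.
  rewrite -{1}(mul1e (nmeas _)); apply: lee_wpmul2r => //.
  rewrite lee_fin; nra.
have er0 : 0 < 3 * eta * rho by rewrite !mulr_gt0.
have Sball : S `<=` cball (s0 v) (3 * eta * rho).
  move=> s [hs hnorm].
  have hs1 : eucl_normr s <= 1.
    by have := hB _ hs; rewrite /B1U /cball /= subr0.
  rewrite -(mulrA (expR t)) in hnorm.
  have := @core R n v s t (eta ^+ 2 * rho ^+ 2) hn2 hQv hv0.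
  have d0 : 0 <= eta ^+ 2 * rho ^+ 2 by rewrite mulr_ge0 ?sqr_ge0.
  have d1 : eta ^+ 2 * rho ^+ 2 <= 1/8.
    have : eta * rho < 1/3 by [].
    have : 0 <= eta * rho by rewrite mulr_ge0 ?ltW.
    nra.
  move=> /(_ d0 d1 hs1 hnorm) h.
  rewrite /cball /=.
  have := @eucl_normr_ge0 R _ (s - s0 v); nra.
apply: le_trans (mono _ _ Sball) _.
rewrite nmE.
apply: le_trans (lee_wpmul2r iL0 (@leb_ball R _ (s0 v) _ er0)) _.
rewrite hL -muleA -EFinM divff ?gt_eqF //.
rewrite mulr1.
have hk : (0 < n - 2)%N by lia.
apply: le_trans (_ : ((3 * eta * rho)%:E <= _)%E).
  rewrite lee_fin; apply: (@expr_le_self R _ _ hk); [exact: ltW | lra].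
have -> : 3 * eta * rho = 3 * rho * eta by ring.
rewrite EFinM; apply: lee_wpmul2l => //.
by rewrite lee_fin mulr_ge0 // ltW.
Qed.
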